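(* Let $A$ and $I$ be finite sets. In the group $\langle\mathcal P^\times(I)\rangle^{\otimes A}$ one has $$\bigotimes_{a\in A}\sum_{J\in\mathcal P^\times(I)}(-1)^{|I|-1-|J|}\langle J\rangle-\sum_{J\in\mathcal P^\times(I)}(-1)^{|I|-1-|J|}\bigotimes_{a\in A}\langle J\rangle=\sum_{k\in\mathcal R'(A,I)}\ \bigotimes_{a\in A}\ \sum_{J\in\mathcal P(k(a))}(-1)^{|k(a)|-|J|}\langle J\rangle.$$
   Context: $\mathcal P(I)$ is the set of subsets of $I$ and $\mathcal P^\times(I)=\mathcal P(I)\setminus\{I\}$; $\langle\mathcal P^\times(I)\rangle$ is the free abelian group with basis $\{\langle J\rangle: J\in\mathcal P^\times(I)\}$, and $\langle\mathcal P^\times(I)\rangle^{\otimes A}$ is the tensor product over $\mathbb Z$ of copies indexed by $A$. $\mathcal R'(A,I)$ is the set of functions $k\colon A\to\mathcal P^\times(I)$ with $\bigcup_{a\in A}k(a)=I$. *)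

(* Defs.v *)
From HB Require Import structures.
From mathcomp Require Import all_boot all_order all_algebra.
Set Implicit Arguments. Unset Strict Implicit. Unset Printing Implicit Defensive.
Import GRing.Theory.
Local Open Scope ring_scope.

(* Model of the free abelian group <P(I)> : finitely supported Z-valued
   functions on subsets of I.  <P^x(I)> is the subgroup supported on proper
   subsets; every element used below lies in it. *)
Definition FreeP (I : finType) := {ffun {set I} -> int}.

Definition gen (I : finType) (J : {set I}) : FreeP I := [ffun K => (K == J)%:Z].

(* Model of the tensor power <P(I)>^{(x)A}: the free abelian group on
   A-indexed families of subsets, i.e. functions {ffun A -> {set I}} -> int;
   the basis element indexed by k is (x)_a <k a>. *)
Definition TensP (A I : finType) := {ffun {ffun A -> {set I}} -> int}.

Definition tens (A I : finType) (x : A -> FreeP I) : TensP A I :=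
  [ffun k : {ffun A -> {set I}} => \prod_(a : A) x a (k a)].

Definition Rprime (A I : finType) (k : {ffun A -> {set I}}) : bool :=
  [forall a, k a != setT] && (\bigcup_(a : A) k a == setT).

(* Main.v *)
Require Import Defs.
From mathcomp Require Import all_boot all_order all_algebra.
From mathcomp Require Import zify.
Import GRing.Theory.
Local Open Scope ring_scope.

Lemma P0 (I : finType) (D : {set I}) :
  \sum_(S : {set I} | S \subset D) (-1 : int) ^+ #|S| = (D == set0)%:R.
Proof.
have E : \prod_(i : I) ((if i \in D then (-1 : int) else 0) + 1) =
  \sum_(J : {set I}) \prod_(i : I) (if i \in J then (if i \in D then (-1 : int) else 0) else 1).
  exact: bigA_distr.
have E2 : \prod_(i : I) ((if i \in D then (-1 : int) else 0) + 1) = (D == set0)%:R.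
  rewrite -cards_eq0 -expr0n -prodr_const.
  rewrite [RHS]big_mkcond /=; apply: eq_bigr => i _; by case: (i \in D).
rewrite -E2 E.
rewrite [LHS]big_mkcond /=; apply: eq_bigr => S _.
rewrite -big_mkcond /=.
case: (boolP (S \subset D)) => SD.
  rewrite -prodr_const; apply: eq_bigr => i iS.
  by rewrite (subsetP SD i iS).
have [i iS iD] : exists2 i, i \in S & i \notin D.
  apply/exists_inP; move: SD; apply: contraR; rewrite negb_exists_in => /forall_inP H.
  by apply/subsetP => x /H; rewrite negbK.
by rewrite (bigD1 i) //= (negbTE iD) mul0r.
Qed.

Lemma L1 (I : finType) (X U : {set I}) :
  \sum_(K : {set I} | K \subset U) ((X \subset K)%:R * (-1 : int) ^+ (#|K| - #|X|)%N)
  = (X == U)%:R.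
Proof.
case: (boolP (X \subset U)) => XU; last first.
  rewrite big1; last first.
    move=> K KU; case: (boolP (X \subset K)) => XK; last by rewrite mul0r.
    by case/negP: XU; apply: subset_trans XK KU.
  by case: eqP => // E; rewrite E subxx in XU.
rewrite (bigID (fun K : {set I} => X \subset K)) /= [X in _ + X]big1 ?addr0; last first.
  by move=> K /andP[_ /negbTE ->]; rewrite mul0r.
rewrite (eq_bigr (fun K : {set I} => (-1 : int) ^+ (#|K| - #|X|))); last first.
  by move=> K /andP[_ ->]; rewrite mul1r.
rewrite (reindex_onto (fun S : {set I} => X :|: S) (fun K : {set I} => K :\: X)) /=; last first.
  move=> K /andP[_ XK]; by rewrite -{2}(setID K X) (setIidPr XK) setUC.
have -> : (X == U) = (U :\: X == set0) by rewrite setD_eq0 eqEsubset XU.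
rewrite -(@P0 _ (U :\: X)); apply: eq_big.
  move=> j; rewrite subUset XU subsetUl setDUl setDv set0U subsetD /=.
  rewrite andbT; congr (_ && _); exact: (sameP eqP setDidPl).
move=> j /andP[_ /eqP E]; rewrite setDUl setDv set0U in E.
have dj : [disjoint j & X] by apply/setDidPl.
by rewrite cardsU setIC (disjoint_setI0 dj) cards0 subn0 addKn.
Qed.

Lemma Lsq (a : nat) : (-1 : int) ^+ a * (-1) ^+ a = 1.
Proof. by rewrite -exprD -signr_odd oddD addbb. Qed.

Lemma sgnE (a b c : nat) : (a + c + c = b)%N -> (-1 : int) ^+ a = (-1) ^+ b.
Proof. by move=> <-; rewrite -addnA exprD (exprD _ c c) Lsq mulr1. Qed.

Lemma La (I : finType) (X : {set I}) :
  \sum_(K : {set I} | K != setT) ((X \subset K)%:R * (-1 : int) ^+ (#|K| - #|X|)%N)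
  = (X != setT)%:R * (-1) ^+ (#|I| - 1 - #|X|)%N.
Proof.
have := L1 _ X setT.
rewrite (eq_bigl predT) /=; last by move=> K; rewrite subsetT.
rewrite (bigD1 setT) //= subsetT mul1r cardsT.
case: eqP => [-> | /eqP XT].
  rewrite cardsT subnn expr0 /= mul0r => /eqP; rewrite -subr_eq0 addrC addrK => /eqP //.
move=> /eqP; rewrite /= addrC addr_eq0 => /eqP ->; rewrite mul1r.
have lt : (#|X| < #|I|)%N by rewrite -cardsT; apply: proper_card; rewrite properT.
have -> : (#|I| - #|X| = (#|I| - 1 - #|X|).+1)%N by lia.
by rewrite exprS mulN1r opprK.
Qed.

Lemma Lb (I : finType) (W : {set I}) :
  (W != setT)%:R = \sum_(U : {set I} | U != setT) (W \subset U)%:R * (-1 : int) ^+ (#|I| - 1 - #|U|)%N.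
Proof.
rewrite (eq_bigr (fun U : {set I} => (-1 : int) ^+ (#|I| - 1 - #|W|)%N * ((W \subset U)%:R * (-1 : int) ^+ (#|U| - #|W|)%N))); last first.
  move=> U UT; case: (boolP (W \subset U)) => WU; last by rewrite !mul0r mulr0.
  rewrite !mul1r -exprD; apply: (sgnE _ _ (#|U| - #|W|)%N).
  have lt : (#|U| < #|I|)%N by rewrite -cardsT; apply: proper_card; rewrite properT.
  have le := subset_leq_card WU.
  lia.
rewrite -mulr_sumr La mulrCA.
by rewrite Lsq mulr1.
Qed.


Lemma sum_ind (I : finType) (P : pred {set I}) (X : {set I}) (h : {set I} -> int) :
  \sum_(J | P J) (X == J)%:R * h J = (P X)%:R * h X.
Proof.
case: (boolP (P X)) => PX.
  rewrite (bigD1 X) //= eqxx mul1r big1 ?addr0 ?mul1r //.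
  by move=> J /andP[_ /negbTE]; rewrite eq_sym => ->; rewrite mul0r.
rewrite mul0r big1 // => J PJ; case: eqP => [E|_]; last by rewrite mul0r.
by rewrite E PJ in PX.
Qed.

Definition cc (I : finType) (X K : {set I}) : int :=
  (X \subset K)%:R * (-1) ^+ (#|K| - #|X|)%N.
Arguments cc {I}.

Theorem lemma15p2 (A I : finType) :
  tens (fun _ : A => \sum_(J : {set I} | J != setT)
                       gen J *~ ((-1) ^+ (#|I| - 1 - #|J|)))
  - \sum_(J : {set I} | J != setT)
      tens (fun _ : A => gen J) *~ ((-1) ^+ (#|I| - 1 - #|J|))
  = \sum_(k : {ffun A -> {set I}} | Rprime k)
      tens (fun a => \sum_(J : {set I} | J \subset k a)
                       gen J *~ ((-1) ^+ (#|k a| - #|J|))).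
Proof.
apply/ffunP => f.
rewrite !(ffunE, sum_ffunE).
set G := fun k : {ffun A -> {set I}} => \prod_a cc (f a) (k a).
have E1 : \prod_a (\sum_(J | J != [set: I]) gen J *~ (-1) ^+ (#|I| - 1 - #|J|)) (f a)
   = \sum_(k : {ffun A -> {set I}} | [forall a, k a != setT]) G k.
  rewrite (eq_bigr (fun a => \sum_(K : {set I} | K != setT) cc (f a) K)); last first.
    move=> a _; rewrite /cc La sum_ffunE -(@sum_ind _ (fun J : {set I} => J != setT) (f a) (fun J => (-1) ^+ (#|I| - 1 - #|J|)%N)).
    by apply: eq_bigr => J _; rewrite ffunMzE mulrzz ffunE natz.
  rewrite bigA_distr_big; apply: eq_bigl => k.
  by apply/ffun_onP/forallP.
have E2 : \sum_(J | J != [set: I]) (tens (fun=> gen J) *~ (-1) ^+ (#|I| - 1 - #|J|)) f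
   = \sum_(k : {ffun A -> {set I}} | \bigcup_(a : A) k a != setT) G k.
  rewrite (eq_bigr (fun J : {set I} => (-1 : int) ^+ (#|I| - 1 - #|J|)%N * \prod_a (f a == J)%:R)); last first.
    move=> J _; rewrite ffunMzE mulrzz ffunE mulrC; congr (_ * _).
    by apply: eq_bigr => a _; rewrite ffunE natz.
  transitivity (\sum_(k : {ffun A -> {set I}}) (\bigcup_a k a != setT)%:R * G k); last first.
    rewrite [RHS]big_mkcond /=; apply: eq_bigr => k _.
    by case: ifP => _; rewrite ?mul1r ?mul0r.
  under [RHS]eq_bigr do rewrite Lb mulr_suml.
  rewrite [RHS]exchange_big /=; apply: eq_bigr => U UT.
  rewrite (eq_bigr (fun a => \sum_(K : {set I} | K \subset U) cc (f a) K)); last first.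
    by move=> a _; rewrite /cc L1.
  rewrite bigA_distr_big mulr_sumr.
  rewrite [RHS](bigID (fun k : {ffun A -> {set I}} => \bigcup_a k a \subset U)) /=.
  rewrite [X in _ = _ + X]big1 ?addr0; last by move=> k /negbTE ->; rewrite !mul0r.
  have HE : forall k : {ffun A -> {set I}}, (k \in ffun_on (fun j : {set I} => j \subset U)) = (\bigcup_a k a \subset U).
    by move=> k; apply/ffun_onP/bigcupsP => H x; [move=> _|]; apply: H.
  apply: eq_big => [k | k Hk]; first exact: HE.
  by rewrite -HE Hk mul1r.
have E3 : \sum_(k : {ffun A -> {set I}} | Rprime k) tens (fun a : A =>
       \sum_(J : {set I} | J \subset k a) gen J *~ (-1) ^+ (#|k a| - #|J|)) f
    = \sum_(k : {ffun A -> {set I}} | Rprime k) G k.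
  apply: eq_bigr => k _; rewrite ffunE; apply: eq_bigr => a _.
  rewrite sum_ffunE /cc -(@sum_ind _ (fun J : {set I} => J \subset k a) (f a) (fun J => (-1) ^+ (#|k a| - #|J|)%N)).
  by apply: eq_bigr => J _; rewrite ffunMzE mulrzz ffunE natz.
rewrite E1 E2 E3.
rewrite (bigID (fun k : {ffun A -> {set I}} => \bigcup_a k a == setT)) /=.
have -> : \sum_(k : {ffun A -> {set I}} | [forall a, k a != [set: I]] && (\bigcup_a k a != [set: I])) G k
   = \sum_(k : {ffun A -> {set I}} | \bigcup_a k a != [set: I]) G k.
  apply: eq_bigl => k; apply/andP/idP => [[] //| H]; split => //.
  apply/forallP => a; apply: contra H => /eqP E.
  by rewrite eqEsubset subsetT /= -E (bigcup_sup a).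
by rewrite addrK.
Qed.
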